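(* The functor $\mathrm{Skew}$ from curved associative algebras to curved Lie algebras, sending $(A,\mu_A,d_A,\vartheta)$ to $(A,[x,y]=\mu_A(x,y)-(-1)^{|x||y|}\mu_A(y,x),d_A,\vartheta)$, has a left adjoint $\mathfrak{U}$ (the curved universal enveloping algebra).
   Context: Ground field $\mathbb{K}$ of characteristic $0$, graded modules with Koszul signs, homological grading. A curved Lie algebra $(\mathfrak{g},[-,-],d_\mathfrak{g},\vartheta)$ is a graded Lie algebra with a degree $-1$ derivation $d_\mathfrak{g}$ of the bracket and an element $\vartheta\in\mathfrak{g}_{-2}$ with $d_\mathfrak{g}^2=[\vartheta,-]$ and $d_\mathfrak{g}(\vartheta)=0$; morphisms are graded Lie algebra maps commuting with pre-differentials and preserving curvatures. A curved associative algebra $(A,\mu_A,d_A,\vartheta)$ is a non-unital graded associative algebra with a degree $-1$ derivation $d_A$ and $\vartheta\in A_{-2}$ with $d_A^2=\mu_A(\vartheta,-)-\mu_A(-,\vartheta)$ and $d_A(\vartheta)=0$; morphisms are algebra maps commuting with pre-differentials and preserving curvatures. *)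

(* Defs.v *)
From HB Require Import structures.
From mathcomp Require Import all_boot all_order all_algebra.
From Stdlib Require Import ClassicalEpsilon.
Set Implicit Arguments. Unset Strict Implicit. Unset Printing Implicit Defensive.
Import Order.TTheory GRing.Theory Num.Theory.
Local Open Scope ring_scope.

(* A Z-graded K-module is represented by its total space V together with the
   family of projections pi n onto the homogeneous components V_n, such that
   V = (+)_n V_n (orthogonal idempotent linear projections, every vector being
   the finite sum of its components). *)
Record is_grading (K : fieldType) (V : lmodType K) (pi : int -> V -> V) : Prop :=
  IsGrading {
    gr_lin : forall n (a : K) (x y : V), pi n (a *: x + y) = a *: pi n x + pi n y;
    gr_orth : forall n m (x : V), pi n (pi m x) = if n == m then pi m x else 0;
    gr_dec : forall x : V, exists s : seq int,
        [/\ uniq s, (forall n, n \notin s -> pi n x = 0) & x = \sum_(n <- s) pi n x]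
  }.

Definition homog (K : fieldType) (V : lmodType K) (pi : int -> V -> V) (n : int) (x : V) :=
  pi n x = x.

Definition ksgn (K : fieldType) (p q : int) : K := (-1) ^+ (absz (p * q)).
Definition ksgn1 (K : fieldType) (p : int) : K := (-1) ^+ (absz p).

Definition bilinear_op (K : fieldType) (V : lmodType K) (m : V -> V -> V) :=
  (forall (a : K) x y z, m (a *: x + y) z = a *: m x z + m y z) /\
  (forall (a : K) x y z, m z (a *: x + y) = a *: m z x + m z y).

Definition linear_op (K : fieldType) (V W : lmodType K) (f : V -> W) :=
  forall (a : K) x y, f (a *: x + y) = a *: f x + f y.

Record curved_lie_axioms (K : fieldType) (V : lmodType K) (pi : int -> V -> V)
    (br : V -> V -> V) (d : V -> V) (th : V) : Prop := CurvedLieAxioms {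
  cla_bil : bilinear_op br;
  cla_deg : forall p q x y, homog pi p x -> homog pi q y -> homog pi (p + q) (br x y);
  cla_antisym : forall p q x y, homog pi p x -> homog pi q y ->
      br x y = - (ksgn K p q *: br y x);
  cla_jacobi : forall p q r x y z, homog pi p x -> homog pi q y -> homog pi r z ->
      ksgn K p r *: br x (br y z) + ksgn K q p *: br y (br z x)
        + ksgn K r q *: br z (br x y) = 0;
  cla_dlin : linear_op d;
  cla_ddeg : forall p x, homog pi p x -> homog pi (p - 1) (d x);
  cla_dder : forall p x y, homog pi p x ->
      d (br x y) = br (d x) y + ksgn1 K p *: br x (d y);
  cla_thdeg : homog pi (-2) th;
  cla_dd : forall x, d (d x) = br th x;
  cla_dth : d th = 0
}.

Record curved_ass_axioms (K : fieldType) (V : lmodType K) (pi : int -> V -> V)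
    (mu : V -> V -> V) (d : V -> V) (th : V) : Prop := CurvedAssAxioms {
  caa_bil : bilinear_op mu;
  caa_deg : forall p q x y, homog pi p x -> homog pi q y -> homog pi (p + q) (mu x y);
  caa_assoc : forall x y z, mu (mu x y) z = mu x (mu y z);
  caa_dlin : linear_op d;
  caa_ddeg : forall p x, homog pi p x -> homog pi (p - 1) (d x);
  caa_dder : forall p x y, homog pi p x ->
      d (mu x y) = mu (d x) y + ksgn1 K p *: mu x (d y);
  caa_thdeg : homog pi (-2) th;
  caa_dd : forall x, d (d x) = mu th x - mu x th;
  caa_dth : d th = 0
}.

Record curvedLie (K : fieldType) := CurvedLie {
  cl_car :> lmodType K;
  cl_pi : int -> cl_car -> cl_car;
  cl_br : cl_car -> cl_car -> cl_car;
  cl_d : cl_car -> cl_car;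
  cl_th : cl_car;
  cl_grading : is_grading cl_pi;
  cl_ax : curved_lie_axioms cl_pi cl_br cl_d cl_th
}.

Record curvedAss (K : fieldType) := CurvedAss {
  ca_car :> lmodType K;
  ca_pi : int -> ca_car -> ca_car;
  ca_mu : ca_car -> ca_car -> ca_car;
  ca_d : ca_car -> ca_car;
  ca_th : ca_car;
  ca_grading : is_grading ca_pi;
  ca_ax : curved_ass_axioms ca_pi ca_mu ca_d ca_th
}.

Arguments cl_pi {K} c.
Arguments cl_br {K} c.
Arguments cl_d {K} c.
Arguments cl_th {K} c.
Arguments cl_grading {K} c.
Arguments cl_ax {K} c.
Arguments ca_pi {K} c.
Arguments ca_mu {K} c.
Arguments ca_d {K} c.
Arguments ca_th {K} c.
Arguments ca_grading {K} c.
Arguments ca_ax {K} c.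

Definition curved_mor (K : fieldType) (V W : lmodType K)
    (pi1 : int -> V -> V) (m1 : V -> V -> V) (d1 : V -> V) (th1 : V)
    (pi2 : int -> W -> W) (m2 : W -> W -> W) (d2 : W -> W) (th2 : W) (f : V -> W) :=
  [/\ linear_op f,
      forall n x, f (pi1 n x) = pi2 n (f x),
      forall x y, f (m1 x y) = m2 (f x) (f y),
      forall x, f (d1 x) = d2 (f x) &
      f th1 = th2].

Definition ass_mor (K : fieldType) (A B : curvedAss K) (f : A -> B) :=
  curved_mor (ca_pi A) (ca_mu A) (ca_d A) (ca_th A)
             (ca_pi B) (ca_mu B) (ca_d B) (ca_th B) f.

Definition ca_supp (K : fieldType) (A : curvedAss K) (x : A) : seq int :=
  proj1_sig (constructive_indefinite_description _ (gr_dec (ca_grading A) x)).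

(* The bracket of Skew(A): bilinear extension of
   [x,y] = mu(x,y) - (-1)^{|x||y|} mu(y,x) on homogeneous elements. *)
Definition skew_br (K : fieldType) (A : curvedAss K) (x y : A) : A :=
  \sum_(p <- ca_supp x) \sum_(q <- ca_supp y)
    (ca_mu A (ca_pi A p x) (ca_pi A q y)
       - ksgn K p q *: ca_mu A (ca_pi A q y) (ca_pi A p x)).

(* f : g -> Skew(A) is a morphism of curved Lie algebras.  Skew(A) has the
   same underlying graded module, pre-differential and curvature as A. *)
Definition lie_mor_to_skew (K : fieldType) (g : curvedLie K) (A : curvedAss K)
    (f : g -> A) :=
  curved_mor (cl_pi g) (cl_br g) (cl_d g) (cl_th g)
             (ca_pi A) (@skew_br K A) (ca_d A) (ca_th A) f.

(* Main.v *)
Require Import Defs.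
From HB Require Import structures.
From mathcomp Require Import all_boot all_order all_algebra.
From mathcomp Require boolp.
From Stdlib Require Import ClassicalEpsilon FunctionalExtensionality PropExtensionality ProofIrrelevance.
Set Implicit Arguments. Unset Strict Implicit. Unset Printing Implicit Defensive.
Import GRing.Theory.
Local Open Scope ring_scope.


Section Generic.
Variable K : fieldType.

Section Lin.
Variables (V W : lmodType K) (h : V -> W) (Hh : linear_op h).
Lemma lin0 : h 0 = 0.
Proof.
have H := Hh 1 0 0; rewrite scaler0 addr0 scale1r in H.
by apply: (addrI (h 0)); rewrite addr0 -H.
Qed.
Lemma linD x y : h (x + y) = h x + h y.
Proof. by rewrite -{1}(scale1r x) Hh scale1r. Qed.
Lemma linZ a x : h (a *: x) = a *: h x.
Proof. by rewrite -(addr0 (a *: x)) Hh lin0 addr0. Qed.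
Lemma linN x : h (- x) = - h x.
Proof. by rewrite -scaleN1r linZ scaleN1r. Qed.
Lemma linB x y : h (x - y) = h x - h y.
Proof. by rewrite linD linN. Qed.
Lemma lin_sum (I : Type) (r : seq I) (F : I -> V) :
  h (\sum_(i <- r) F i) = \sum_(i <- r) h (F i).
Proof. exact: (big_morph h linD lin0). Qed.
End Lin.

Section Bil.
Variables (V : lmodType K) (m : V -> V -> V) (Hm : bilinear_op m).
Lemma bil_linl z : linear_op (m ^~ z). Proof. by move=> a x y; apply: Hm.1. Qed.
Lemma bil_linr z : linear_op (m z). Proof. by move=> a x y; apply: Hm.2. Qed.
Lemma mu0l z : m 0 z = 0. Proof. exact: (lin0 (bil_linl z)). Qed.
Lemma mu0r z : m z 0 = 0. Proof. exact: (lin0 (bil_linr z)). Qed.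
End Bil.

Section Grad.
Variables (V : lmodType K) (pi : int -> V -> V).
Hypothesis Hl : forall n (a : K) (x y : V), pi n (a *: x + y) = a *: pi n x + pi n y.
Hypothesis Ho : forall n m (x : V), pi n (pi m x) = if n == m then pi m x else 0.

Lemma dec_sum (l : seq (int * V)) :
  (forall p, p \in l -> pi p.1 p.2 = p.2) ->
  exists s : seq int, [/\ uniq s, (forall n, n \notin s -> pi n (\sum_(p <- l) p.2) = 0)
     & \sum_(p <- l) p.2 = \sum_(n <- s) pi n (\sum_(p <- l) p.2)].
Proof.
have Hlin : forall n, linear_op (pi n) by move=> n a x y; apply: Hl.
elim: l => [|[m y] l IH] Hp.
  exists [::]; split => //; first by move=> n _; rewrite big_nil (lin0 (Hlin n)).
  by rewrite !big_nil.
have Hy : pi m y = y by apply: (Hp (m, y)); rewrite mem_head.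
have [s [us vs ds]] : exists s : seq int, [/\ uniq s, (forall n, n \notin s -> pi n (\sum_(p <- l) p.2) = 0)
     & \sum_(p <- l) p.2 = \sum_(n <- s) pi n (\sum_(p <- l) p.2)].
  by apply: IH => p Hpl; apply: Hp; rewrite in_cons Hpl orbT.
have piy n : pi n y = if n == m then y else 0 by rewrite -{1}Hy Ho Hy.
rewrite big_cons /=.
set x := \sum_(p <- l) p.2 in vs ds *.
have Hsy : forall r : seq int, uniq r -> \sum_(n <- r) pi n y = if m \in r then y else 0.
  move=> r ur; rewrite (eq_bigr (fun n => if n == m then y else 0)); last by move=> n _; rewrite piy.
  case: ifP => Hm.
    by rewrite (bigD1_seq m) //= eqxx big1 ?addr0 // => n /negbTE ->.
  by apply: big1_seq => n Hn; case: eqP => // E; move: Hn; rewrite E Hm.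
case Hms : (m \in s).
  exists s; split => //.
    move=> n Hn; rewrite (linD (Hlin n)) vs // piy; case: eqP => [E|_]; last by rewrite addr0.
    by move: Hn; rewrite E Hms.
  rewrite (eq_bigr (fun n => pi n y + pi n x)); last by move=> n _; rewrite (linD (Hlin n)).
  by rewrite big_split /= Hsy // Hms -ds.
exists (m :: s); split.
- by rewrite /= Hms.
- move=> n; rewrite in_cons negb_or => /andP [Hnm Hns].
  by rewrite (linD (Hlin n)) vs // piy (negbTE Hnm) addr0.
- rewrite big_cons (eq_bigr (fun n => pi n y + pi n x)); last by move=> n _; rewrite (linD (Hlin n)).
  by rewrite big_split /= Hsy // Hms (linD (Hlin m)) Hy vs ?Hms // -ds addr0 add0r.
Qed.
End Grad.

Lemma supp_indep (V : zmodType) (G : int -> V) (s1 s2 : seq int) :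
  uniq s1 -> uniq s2 -> (forall n, n \notin s1 -> G n = 0) -> (forall n, n \notin s2 -> G n = 0) ->
  \sum_(n <- s1) G n = \sum_(n <- s2) G n.
Proof.
move=> u1 u2 H1 H2.
have E : forall (r1 r2 : seq int), (forall n, n \notin r2 -> G n = 0) ->
    \sum_(n <- r1) G n = \sum_(n <- [seq n <- r1 | n \in r2]) G n.
  move=> r1 r2 H; rewrite big_filter [RHS]big_mkcond; apply: eq_bigr => n _.
  by case: ifP => // /negbT /H.
rewrite (E s1 s2 H2) (E s2 s1 H1); apply: perm_big; apply: uniq_perm; rewrite ?filter_uniq //.
by move=> n; rewrite !mem_filter andbC.
Qed.

Lemma ca_suppP (A : curvedAss K) (x : A) :
  [/\ uniq (ca_supp x), forall n, n \notin ca_supp x -> ca_pi A n x = 0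
    & x = \sum_(n <- ca_supp x) ca_pi A n x].
Proof. rewrite /ca_supp; case: constructive_indefinite_description => s H /=; exact: H. Qed.

Lemma skew_mor (B A : curvedAss K) (h : B -> A) : ass_mor h ->
  forall u v, h (skew_br u v) = skew_br (h u) (h v).
Proof.
case=> hl hpi hmu hd hth u v.
have bilA := caa_bil (ca_ax A).
rewrite /skew_br (lin_sum hl).
have [u1 u2 _] := ca_suppP u; have [v1 v2 _] := ca_suppP v.
have [hu1 hu2 _] := ca_suppP (h u); have [hv1 hv2 _] := ca_suppP (h v).
rewrite (eq_bigr (fun p => \sum_(q <- ca_supp (h v)) (ca_mu A (ca_pi A p (h u)) (ca_pi A q (h v))
      - ksgn K p q *: ca_mu A (ca_pi A q (h v)) (ca_pi A p (h u))))).
  apply: supp_indep => // n Hn; apply: big1 => q _.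
    by rewrite -hpi u2 // lin0 // mu0l // mu0r // scaler0 subr0.
  by rewrite hu2 // mu0l // mu0r // scaler0 subr0.
move=> p _; rewrite (lin_sum hl).
rewrite (eq_bigr (fun q => ca_mu A (ca_pi A p (h u)) (ca_pi A q (h v)) -
      ksgn K p q *: ca_mu A (ca_pi A q (h v)) (ca_pi A p (h u)))); last first.
  by move=> q _; rewrite (linB hl) (linZ hl) !hmu !hpi.
apply: supp_indep => // q Hq.
  by rewrite -(hpi q v) v2 // (lin0 hl) mu0l // mu0r // scaler0 subr0.
by rewrite hv2 // mu0l // mu0r // scaler0 subr0.
Qed.

End Generic.

Section Free.
Variable K : fieldType.
Variable g : curvedLie K.

Inductive term : Type :=
| Tgen of (cl_car g)
| Tzero
| Tadd of term & term
| Topp of term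
| Tscale of K & term
| Tmul of term & term
| Td of term
| Tpi of int & term
| Tth.

Fixpoint eval (A : curvedAss K) (f : cl_car g -> A) (t : term) : A :=
  match t with
  | Tgen x => f x
  | Tzero => 0
  | Tadd t1 t2 => eval f t1 + eval f t2
  | Topp t1 => - eval f t1
  | Tscale a t1 => a *: eval f t1
  | Tmul t1 t2 => ca_mu A (eval f t1) (eval f t2)
  | Td t1 => ca_d A (eval f t1)
  | Tpi n t1 => ca_pi A n (eval f t1)
  | Tth => ca_th A
  end.

Definition Rt (t1 t2 : term) : Prop :=
  forall (A : curvedAss K) (f : cl_car g -> A), lie_mor_to_skew f -> eval f t1 = eval f t2.

Definition canon (t : term) : term := epsilon (inhabits t) (Rt t).

Lemma canon_spec t : Rt t (canon t).
Proof. apply: (epsilon_spec (inhabits t) (Rt t)); exists t; by move=> ???. Qed.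

Lemma canon_eq t1 t2 : Rt t1 t2 -> canon t1 = canon t2.
Proof.
move=> H; rewrite /canon.
suff -> : Rt t1 = Rt t2 by rewrite (proof_irrelevance _ (inhabits t1) (inhabits t2)).
apply: functional_extensionality => t; apply: propositional_extensionality.
split=> H' A f Hf; [by rewrite -(H A f Hf) (H' A f Hf) | by rewrite (H A f Hf) (H' A f Hf)].
Qed.

Lemma canon_idem t : canon (canon t) = canon t.
Proof. apply: canon_eq => A f Hf; by rewrite (canon_spec t). Qed.

Definition U := {t : term | canon t = t}.

Definition cl (t : term) : U := exist _ (canon t) (canon_idem t).

HB.instance Definition _ := boolp.gen_eqMixin U.
HB.instance Definition _ := boolp.gen_choiceMixin U.

Lemma valK (u : U) : cl (proj1_sig u) = u.
Proof.
case: u => t Ht; rewrite /cl /=.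
move: (canon_idem t); rewrite Ht => e; by rewrite (proof_irrelevance _ e Ht).
Qed.

Lemma ev_cl (A : curvedAss K) (f : cl_car g -> A) t : lie_mor_to_skew f ->
  eval f (canon t) = eval f t.
Proof. move=> Hf /=; by rewrite -(canon_spec t). Qed.

Lemma extU (u v : U) :
  (forall (A : curvedAss K) (f : cl_car g -> A), lie_mor_to_skew f ->
     eval f (proj1_sig u) = eval f (proj1_sig v)) -> u = v.
Proof.
move=> H; rewrite -(valK u) -(valK v) /cl.
have e := canon_eq H.
move: (canon_idem (proj1_sig u)) (canon_idem (proj1_sig v)); rewrite e => p q.
by rewrite (proof_irrelevance _ p q).
Qed.

Definition Uzero : U := cl Tzero.
Definition Uadd (u v : U) : U := cl (Tadd (proj1_sig u) (proj1_sig v)).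
Definition Uopp (u : U) : U := cl (Topp (proj1_sig u)).
Definition Uscale (a : K) (u : U) : U := cl (Tscale a (proj1_sig u)).
Definition Umu (u v : U) : U := cl (Tmul (proj1_sig u) (proj1_sig v)).
Definition Ud (u : U) : U := cl (Td (proj1_sig u)).
Definition Upi (n : int) (u : U) : U := cl (Tpi n (proj1_sig u)).
Definition Uth : U := cl Tth.
Definition eta (x : cl_car g) : U := cl (Tgen x).

Ltac evcl := match goal with H : lie_mor_to_skew _ |- _ => rewrite /= ?(ev_cl _ H) /= end.
Ltac solveU := apply: extU => ? ? ?; do 4?evcl.

Lemma UaddA : associative Uadd. Proof. move=> x y z; solveU; by rewrite addrA. Qed.
Lemma UaddC : commutative Uadd. Proof. move=> x y; solveU; by rewrite addrC. Qed.
Lemma Uadd0 : left_id Uzero Uadd. Proof. move=> x; solveU; by rewrite add0r. Qed.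
Lemma UaddN : left_inverse Uzero Uopp Uadd. Proof. move=> x; solveU; by rewrite addNr. Qed.

HB.instance Definition _ := GRing.isZmodule.Build U UaddA UaddC Uadd0 UaddN.

Lemma UscaleA a b v : Uscale a (Uscale b v) = Uscale (a * b) v.
Proof. solveU; by rewrite scalerA. Qed.
Lemma Uscale1 : left_id 1 Uscale. Proof. move=> x; solveU; by rewrite scale1r. Qed.
Lemma UscaleDr : right_distributive Uscale +%R.
Proof. move=> a x y; solveU; by rewrite scalerDr. Qed.
Lemma UscaleDl v : {morph Uscale^~ v: a b / a + b}.
Proof. move=> a b; solveU; by rewrite scalerDl. Qed.

HB.instance Definition _ := GRing.Zmodule_isLmodule.Build K U UscaleA Uscale1 UscaleDr UscaleDl.


Definition evU (A : curvedAss K) (f : cl_car g -> A) (u : U) : A := eval f (proj1_sig u).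

Lemma extE (u v : U) :
  (forall (A : curvedAss K) (f : cl_car g -> A), lie_mor_to_skew f -> evU f u = evU f v) -> u = v.
Proof. exact: extU. Qed.

Section EvU.
Variables (A : curvedAss K) (f : cl_car g -> A) (Hf : lie_mor_to_skew f).
Lemma evU_cl t : evU f (cl t) = eval f t. Proof. exact: ev_cl. Qed.
Lemma evU0 : evU f 0 = 0. Proof. exact: (evU_cl Tzero). Qed.
Lemma evUD x y : evU f (x + y) = evU f x + evU f y. Proof. exact: (evU_cl (Tadd _ _)). Qed.
Lemma evUN x : evU f (- x) = - evU f x. Proof. exact: (evU_cl (Topp _)). Qed.
Lemma evUZ a x : evU f (a *: x) = a *: evU f x. Proof. exact: (evU_cl (Tscale _ _)). Qed.
Lemma evUB x y : evU f (x - y) = evU f x - evU f y. Proof. by rewrite evUD evUN. Qed.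
Lemma evUmu x y : evU f (Umu x y) = ca_mu A (evU f x) (evU f y). Proof. exact: (evU_cl (Tmul _ _)). Qed.
Lemma evUd x : evU f (Ud x) = ca_d A (evU f x). Proof. exact: (evU_cl (Td _)). Qed.
Lemma evUpi n x : evU f (Upi n x) = ca_pi A n (evU f x). Proof. exact: (evU_cl (Tpi _ _)). Qed.
Lemma evUth : evU f Uth = ca_th A. Proof. exact: (evU_cl Tth). Qed.
Lemma evUeta x : evU f (eta x) = f x. Proof. exact: (evU_cl (Tgen _)). Qed.
Lemma evU_homog n x : Upi n x = x -> ca_pi A n (evU f x) = evU f x.
Proof. by move=> H; rewrite -evUpi H. Qed.
End EvU.

Ltac evr := match goal with H : lie_mor_to_skew _ |- _ =>
  do ![rewrite (evU0 H) | rewrite (evUD H) | rewrite (evUN H) | rewrite (evUZ H) | rewrite (evUmu H)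
      | rewrite (evUd H) | rewrite (evUpi H) | rewrite (evUth H) | rewrite (evUeta H)] end.
Ltac solveE := apply: extE => ? ? ?; evr.

Lemma Ubil : bilinear_op Umu.
Proof. split=> a x y z; apply: extE => A f Hf; evr; [exact: (caa_bil (ca_ax A)).1 | exact: (caa_bil (ca_ax A)).2]. Qed.
Lemma Udeg p q x y : homog Upi p x -> homog Upi q y -> homog Upi (p + q) (Umu x y).
Proof.
rewrite /homog => hx hy; apply: extE => A f Hf; evr.
apply: (caa_deg (ca_ax A)); exact: evU_homog.
Qed.
Lemma Uassoc x y z : Umu (Umu x y) z = Umu x (Umu y z).
Proof. apply: extE => A f Hf; evr; exact: (caa_assoc (ca_ax A)). Qed.
Lemma Udlin : linear_op Ud.
Proof. move=> a x y; apply: extE => A f Hf; evr; exact: (caa_dlin (ca_ax A)). Qed.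
Lemma Uddeg p x : homog Upi p x -> homog Upi (p - 1) (Ud x).
Proof.
rewrite /homog => hx; apply: extE => A f Hf; evr.
apply: (caa_ddeg (ca_ax A)); exact: evU_homog.
Qed.
Lemma Udder p x y : homog Upi p x -> Ud (Umu x y) = Umu (Ud x) y + ksgn1 K p *: Umu x (Ud y).
Proof.
rewrite /homog => hx; apply: extE => A f Hf; evr.
apply: (caa_dder (ca_ax A)); exact: evU_homog.
Qed.
Lemma Uthdeg : homog Upi (-2) Uth.
Proof. rewrite /homog; apply: extE => A f Hf; evr; exact: (caa_thdeg (ca_ax A)). Qed.
Lemma Udd x : Ud (Ud x) = Umu Uth x - Umu x Uth.
Proof. apply: extE => A f Hf; evr; exact: (caa_dd (ca_ax A)). Qed.
Lemma Udth : Ud Uth = 0.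
Proof. apply: extE => A f Hf; evr; exact: (caa_dth (ca_ax A)). Qed.

Lemma Ugr_lin n (a : K) (x y : U) : Upi n (a *: x + y) = a *: Upi n x + Upi n y.
Proof. apply: extE => A f Hf; evr; exact: (gr_lin (ca_grading A)). Qed.
Lemma Ugr_orth n m (x : U) : Upi n (Upi m x) = if n == m then Upi m x else 0.
Proof.
case E: (n == m); apply: extE => A f Hf; evr; by rewrite (gr_orth (ca_grading A)) E.
Qed.

Lemma Ulin_pi n : linear_op (Upi n). Proof. by move=> a x y; apply: Ugr_lin. Qed.
Lemma eta_lin : linear_op eta.
Proof.
move=> a x y; apply: extE => A f Hf; evr.
by case: Hf => Hl _ _ _ _; apply: Hl.
Qed.

Lemma Qterm (t : term) : exists l : seq (int * U),
  (forall p, p \in l -> Upi p.1 p.2 = p.2) /\ cl t = \sum_(p <- l) p.2.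
Proof.
elim: t.
- move=> x; have [s [_ _ Hs]] := gr_dec (cl_grading g) x.
  exists [seq (n, eta (cl_pi g n x)) | n <- s]; split.
    move=> p /mapP [n _ ->] /=; apply: extE => A f Hf; evr.
    case: Hf => _ Hp _ _ _; by rewrite Hp (gr_orth (ca_grading A)) eqxx.
  by rewrite big_map -(lin_sum eta_lin) -Hs.
- by exists [::]; split => //; rewrite big_nil.
- move=> t1 [l1 [H1 E1]] t2 [l2 [H2 E2]]; exists (l1 ++ l2); split.
    by move=> p; rewrite mem_cat => /orP [/H1|/H2].
  rewrite big_cat /= -E1 -E2; apply: extE => A f Hf; evr; by rewrite !(evU_cl Hf).
- move=> t1 [l1 [H1 E1]]; exists [seq (p.1, - p.2) | p <- l1]; split.
    move=> p /mapP [q Hq ->] /=; by rewrite (linN (Ulin_pi _)) H1.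
  rewrite big_map sumrN -E1; apply: extE => A f Hf; evr; by rewrite !(evU_cl Hf).
- move=> a t1 [l1 [H1 E1]]; exists [seq (p.1, a *: p.2) | p <- l1]; split.
    move=> p /mapP [q Hq ->] /=; by rewrite (linZ (Ulin_pi _)) H1.
  rewrite big_map -scaler_sumr -E1; apply: extE => A f Hf; evr; by rewrite !(evU_cl Hf).
- move=> t1 [l1 [H1 E1]] t2 [l2 [H2 E2]].
  exists [seq (p.1 + q.1, Umu p.2 q.2) | p <- l1, q <- l2]; split.
    move=> r /allpairsP [[p q] [Hp Hq ->]] /=; apply: Udeg; [exact: H1 | exact: H2].
  rewrite big_allpairs_dep /=.
  have -> : cl (Tmul t1 t2) = Umu (cl t1) (cl t2) by apply: extE => A f Hf; evr; by rewrite !(evU_cl Hf).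
  rewrite E1 (lin_sum (bil_linl Ubil _)); apply: eq_bigr => p _.
  by rewrite E2 (lin_sum (bil_linr Ubil _)).
- move=> t1 [l1 [H1 E1]]; exists [seq (p.1 - 1, Ud p.2) | p <- l1]; split.
    move=> p /mapP [q Hq ->] /=; apply: Uddeg; exact: H1.
  have -> : cl (Td t1) = Ud (cl t1) by apply: extE => A f Hf; evr; by rewrite !(evU_cl Hf).
  by rewrite big_map E1 (lin_sum Udlin).
- move=> n t1 [l1 [H1 E1]]; exists [seq (n, Upi n p.2) | p <- l1]; split.
    move=> p /mapP [q Hq ->] /=; by rewrite Ugr_orth eqxx.
  have -> : cl (Tpi n t1) = Upi n (cl t1) by apply: extE => A f Hf; evr; by rewrite !(evU_cl Hf).
  by rewrite big_map E1 (lin_sum (Ulin_pi n)).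
- exists [:: (-2, Uth)]; split; first by move=> p; rewrite inE => /eqP -> /=; apply: Uthdeg.
  by rewrite big_cons big_nil addr0.
Qed.

Lemma Ugr : is_grading Upi.
Proof.
split; [exact: Ugr_lin | exact: Ugr_orth |].
move=> x; have [l [Hl E]] := Qterm (proj1_sig x).
rewrite valK in E; rewrite E.
exact: (dec_sum Ugr_lin Ugr_orth Hl).
Qed.

Lemma Uax : curved_ass_axioms Upi Umu Ud Uth.
Proof.
split; [exact: Ubil | exact: Udeg | exact: Uassoc | exact: Udlin | exact: Uddeg
       | exact: Udder | exact: Uthdeg | exact: Udd | exact: Udth].
Qed.

Definition UA : curvedAss K := @CurvedAss K U Upi Umu Ud Uth Ugr Uax.

Lemma hmor (A : curvedAss K) (f : cl_car g -> A) : lie_mor_to_skew f -> ass_mor (A := UA) (evU f).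
Proof.
move=> Hf; split.
- by move=> a x y /=; evr.
- by move=> n x /=; evr.
- by move=> x y /=; evr.
- by move=> x /=; evr.
- by rewrite /=; evr.
Qed.

Lemma eta_mor : lie_mor_to_skew (A := UA) eta.
Proof.
split.
- exact: eta_lin.
- move=> n x; apply: extE => A f Hf; evr; by case: Hf => _ H _ _ _; rewrite H.
- move=> x y; apply: extE => A f Hf; rewrite (skew_mor (hmor Hf)); evr.
  by case: Hf => _ _ H _ _; rewrite H.
- move=> x; apply: extE => A f Hf; evr; by case: Hf => _ _ _ H _; rewrite H.
- apply: extE => A f Hf; evr; by case: Hf => _ _ _ _ H; rewrite H.
Qed.

Lemma univ (A : curvedAss K) (f : cl_car g -> A) : lie_mor_to_skew f ->
  exists h : UA -> A,
    [/\ ass_mor h, (forall x, h (eta x) = f x) &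
        forall h' : UA -> A, ass_mor h' -> (forall x, h' (eta x) = f x) ->
          forall u, h' u = h u].
Proof.
move=> Hf; exists (evU f); split; first exact: hmor.
  by move=> x; evr.
move=> h' [hl hpi hmu hd hth] heta u.
rewrite -(valK u) (evU_cl Hf).
elim: (proj1_sig u).
- by move=> x; apply: heta.
- exact: (lin0 hl).
- move=> t1 IH1 t2 IH2 /=; rewrite -IH1 -IH2 -(linD hl); congr h'.
  by apply: extE => B f' Hf'; evr; rewrite !(evU_cl Hf').
- move=> t1 IH1 /=; rewrite -IH1 -(linN hl); congr h'.
  by apply: extE => B f' Hf'; evr; rewrite !(evU_cl Hf').
- move=> a t1 IH1 /=; rewrite -IH1 -(linZ hl); congr h'.
  by apply: extE => B f' Hf'; evr; rewrite !(evU_cl Hf').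
- move=> t1 IH1 t2 IH2 /=; rewrite -IH1 -IH2 -hmu; congr h'.
  by apply: extE => B f' Hf'; evr; rewrite !(evU_cl Hf').
- move=> t1 IH1 /=; rewrite -IH1 -hd; congr h'.
  by apply: extE => B f' Hf'; evr; rewrite !(evU_cl Hf').
- move=> n t1 IH1 /=; rewrite -IH1 -hpi; congr h'.
  by apply: extE => B f' Hf'; evr; rewrite !(evU_cl Hf').
- exact: hth.
Qed.

End Free.

Theorem corollary3p12 (K : fieldType) (hK : [pchar K] =i pred0) (g : curvedLie K) :
  exists (U : curvedAss K) (eta : g -> U),
    lie_mor_to_skew eta /\
    forall (A : curvedAss K) (f : g -> A), lie_mor_to_skew f ->
      exists h : U -> A,
        [/\ ass_mor h, (forall x, h (eta x) = f x) &
            forall h' : U -> A, ass_mor h' -> (forall x, h' (eta x) = f x) ->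
              forall u, h' u = h u].
Proof.
exists (UA g), (@eta K g); split; first exact: eta_mor.
move=> A f Hf; exact: univ.
Qed.
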